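(* Let $P\in\mathcal{M}$ be the data-generating distribution, let $\boldsymbol{\psi}=(\psi_k)_{k\in\mathbb{K}}$ be a regularization of a parameter $\psi:\mathcal{M}\to\Theta$, and let $d$ be a distance such that $\boldsymbol{\psi}$ is continuous at $P$ with respect to $d$ with family of moduli of continuity $(\delta_k)_{k\in\mathbb{K}}$. Suppose $d(P_n,P)=o_P(1)$. Then there exists a sequence $(k_n)_{n\in\mathbb{N}}$ in $\mathbb{K}$ such that $$B_{k_n}(P)=o(1)\quad\text{and}\quad \delta_{k_n}(d(P_n,P))=o_P(1),$$ and $$\|\psi_{k_n}(P_n)-\psi(P)\|_\Theta=o_P(1).$$
   Context: Let $\mathbb{Z}\subseteq\mathbb{R}^d$, let $\mathcal{P}(\mathbb{Z})$ be the set of Borel probability measures on $\mathbb{Z}$ and $ca(\mathbb{Z})$ the space of signed Borel measures of finite variation. Data $Z_1,Z_2,\dots$ are IID with law $P$; $\mathbf{P}$ is the induced product probability on $\mathbb{Z}^\infty$, and $o_P,O_P$ refer to $\mathbf{P}$. A model is a subset $\mathcal{M}\subseteq\mathcal{P}(\mathbb{Z})$; a parameter is a map $\psi:\mathcal{M}\to\Theta$ where $(\Theta,\|\cdot\|_\Theta)$ is a normed space. $\mathcal{D}$ denotes the set of discretely supported probability measures on $\mathbb{Z}$ and $P_n=n^{-1}\sum_{i=1}^n\delta_{Z_i}\in\mathcal{D}$ the empirical distribution. A tuning set is a subset $\mathbb{K}\subseteq\mathbb{R}_+$ unbounded from above. A regularization of $\psi$ is a family $\boldsymbol{\psi}=(\psi_k)_{k\in\mathbb{K}}$,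 $\mathbb{K}$ a tuning set, with $\psi_k:\mathbb{D}_\psi\subseteq ca(\mathbb{Z})\to\Theta$ for a set $\mathbb{D}_\psi\supseteq\mathcal{M}\cup\mathcal{D}$, such that for every $P\in\mathcal{M}$ the approximation error $B_k(P):=\|\psi_k(P)-\psi(P)\|_\Theta$ tends to $0$ as $k\to\infty$. A modulus of continuity is a continuous non-decreasing $f:\mathbb{R}_+\to\mathbb{R}_+$ with $f(t)=0$ iff $t=0$. The regularization is continuous at $P\in\mathbb{D}_\psi$ with respect to $d$ if there is a family of moduli of continuity $(\delta_k)$ with $\|\psi_k(P')-\psi_k(P)\|_\Theta\le\delta_k(d(P',P))$ for all $k\in\mathbb{K}$ and all $P'\in\mathbb{D}_\psi$. *)

(* Defs.v *)
From HB Require Import structures.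
From mathcomp Require Import all_boot all_order all_algebra.
From mathcomp Require Import all_classical all_reals all_analysis.

Set Implicit Arguments.
Unset Strict Implicit.
Unset Printing Implicit Defensive.

Import Order.TTheory GRing.Theory Num.Theory.
Import numFieldNormedType.Exports.

Local Open Scope classical_set_scope.
Local Open Scope ring_scope.

(* Set functions on the sample space; elements of ca(Z), P(Z), D are
   represented by their underlying set functions. *)
Definition setfun {dZ} (Z : measurableType dZ) (R : realType) :=
  set Z -> \bar R.

(* ca(Z): signed (Borel) measures of finite variation = finite-valued
   countably additive set functions = MathComp-Analysis charges. *)
Definition is_signed_measure {dZ} {Z : measurableType dZ} {R : realType}
  (m : setfun Z R) : Prop :=
  exists c : {charge set Z -> \bar R}, (c : set Z -> \bar R) = m.

Definition is_probability {dZ} {Z : measurableType dZ} {R : realType}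
  (m : setfun Z R) : Prop :=
  exists p : probability Z R, (p : set Z -> \bar R) = m.

Definition is_discrete_probability {dZ} {Z : measurableType dZ}
  {R : realType} (m : setfun Z R) : Prop :=
  is_probability m /\
  exists (x : nat -> Z) (w : nat -> R),
    (forall i, 0 <= w i) /\
    (\sum_(0 <= i <oo) (w i)%:E = 1)%E /\
    forall A, measurable A ->
      m A = (\sum_(0 <= i <oo) (w i * \1_A (x i))%:E)%E.

Definition empirical {dZ} {Z : measurableType dZ} {R : realType}
  {Omega : Type} (X : nat -> Omega -> Z) (n : nat) (w : Omega)
  : setfun Z R :=
  fun A => ((n%:R)^-1 * \sum_(i < n) \1_A (X i w))%:E.

Definition mutually_independent {dO dZ} {Omega : measurableType dO}
  {Z : measurableType dZ} {R : realType} (Pr : probability Omega R)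
  (X : nat -> Omega -> Z) : Prop :=
  forall (I : seq nat) (A : nat -> set Z), uniq I ->
    (forall i, measurable (A i)) ->
    Pr (\bigcap_(i in [set j | j \in I]) (X i @^-1` A i)) =
    (\prod_(i <- I) Pr (X i @^-1` A i))%E.

Definition iid_with_law {dO dZ} {Omega : measurableType dO}
  {Z : measurableType dZ} {R : realType} (Pr : probability Omega R)
  (X : nat -> Omega -> Z) (P : setfun Z R) : Prop :=
  (forall i, measurable_fun setT (X i)) /\
  (forall i A, measurable A -> Pr (X i @^-1` A) = P A) /\
  mutually_independent Pr X.

(* Y_n = o_P(1): convergence to 0 in (outer) probability,
   i.e. P*(|Y_n| > eps) -> 0 for every eps > 0. *)
Definition oP1 {dO} {Omega : measurableType dO} {R : realType}
  (Pr : probability Omega R) (Y : nat -> Omega -> R) : Prop :=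
  forall eps : R, 0 < eps -> forall eta : R, 0 < eta ->
    \forall n \near \oo, exists A : set Omega,
      [/\ measurable A, [set w | eps < `|Y n w|] `<=` A & (Pr A <= eta%:E)%E].

Definition tuning_set {R : realType} (K : set R) : Prop :=
  (forall k, K k -> 0 <= k) /\ (forall M : R, exists2 k, K k & M < k).

Definition vanishes_along {R : realType} (K : set R) (f : R -> R) : Prop :=
  forall eps : R, 0 < eps -> exists k0 : R,
    forall k, K k -> k0 <= k -> `|f k| < eps.

Definition modulus_of_continuity {R : realType} (f : R -> R) : Prop :=
  [/\ {within [set t : R | 0 <= t], continuous f},
      (forall s t, 0 <= s -> s <= t -> f s <= f t),
      (forall t, 0 <= t -> 0 <= f t) &
      (forall t, 0 <= t -> (f t = 0 <-> t = 0))].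

Definition regularization {dZ} {Z : measurableType dZ} {R : realType}
  {Theta : normedModType R} (M : set (setfun Z R)) (psi : setfun Z R -> Theta)
  (K : set R) (Dpsi : set (setfun Z R)) (psik : R -> setfun Z R -> Theta)
  : Prop :=
  [/\ tuning_set K,
      (forall m, Dpsi m -> is_signed_measure m),
      (forall m, M m -> Dpsi m),
      (forall m, is_discrete_probability m -> Dpsi m) &
      (forall P, M P -> vanishes_along K (fun k => `|psik k P - psi P|))].

Definition distance_on {dZ} {Z : measurableType dZ} {R : realType}
  (Dpsi : set (setfun Z R)) (dist : setfun Z R -> setfun Z R -> R) : Prop :=
  [/\ (forall m m', 0 <= dist m m'),
      (forall m m', Dpsi m -> Dpsi m' -> (dist m m' = 0 <-> m = m')),
      (forall m m', Dpsi m -> Dpsi m' -> dist m m' = dist m' m) &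
      (forall m1 m2 m3, Dpsi m1 -> Dpsi m2 -> Dpsi m3 ->
         dist m1 m3 <= dist m1 m2 + dist m2 m3)].

Definition continuous_regularization_at {dZ} {Z : measurableType dZ}
  {R : realType} {Theta : normedModType R} (K : set R)
  (Dpsi : set (setfun Z R)) (psik : R -> setfun Z R -> Theta)
  (dist : setfun Z R -> setfun Z R -> R) (delta : R -> R -> R)
  (P : setfun Z R) : Prop :=
  (forall k, K k -> modulus_of_continuity (delta k)) /\
  (forall k P', K k -> Dpsi P' -> `|psik k P' - psik k P| <= delta k (dist P' P)).

(* Main.v *)
Require Import Defs.
From HB Require Import structures.
From mathcomp Require Import all_boot all_order all_algebra.
From mathcomp Require Import all_classical all_reals all_analysis.
Import Order.TTheory GRing.Theory Num.Theory.
Import numFieldNormedType.Exports.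
Local Open Scope classical_set_scope.
Local Open Scope ring_scope.

From mathcomp Require Import zify.
Lemma fin_series (R : realType) (f : nat -> R) n :
  (forall i, 0 <= f i) -> (forall i, (n <= i)%N -> f i = 0) ->
  (\sum_(0 <= i <oo) (f i)%:E = (\sum_(i < n) f i)%:E)%E.
Proof.
move=> f0 fn.
rewrite (@nneseries_split R _ 0 n); last by move=> k _; rewrite lee_fin.
rewrite add0n eseries0 ?adde0; last by move=> i ni _; rewrite fn.
by rewrite big_mkord -sumEFin.
Qed.

Lemma emp_discrete (R : realType) dZ (Z : measurableType dZ) (Omega : Type)
  (X : nat -> Omega -> Z) n w : (0 < n)%N ->
  is_discrete_probability (empirical (R:=R) X n w).
Proof.
move=> n0; split.
  exists (mnormalize (msum (fun i => \d_(X i w)) n) (\d_(X 0%N w))).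
  apply/funext => A; rewrite /empirical /=; unfold mnormalize.
  have hm B : msum (fun i => @dirac _ Z (X i w) R) n B = (\sum_(i<n) \1_B (X i w))%:E.
    by rewrite /msum sumEFin.
  have hT : \sum_(i<n) \1_[set: Z] (X i w) = n%:R :> R.
    by under eq_bigr do rewrite indicT; rewrite sumr_const card_ord.
  rewrite [X in X == _](_ : _ = (n%:R)%:E); last by rewrite -hT; exact: sumEFin.
  have nn0 : (n == 0)%N = false by case: (n) n0.
  rewrite eqe pnatr_eq0 nn0 /=.
  rewrite [X in X == _](_ : _ = (n%:R)%:E); last by rewrite -hT; exact: sumEFin.
  rewrite [X in fine X](_ : _ = (n%:R)%:E); last by rewrite -hT; exact: sumEFin.
  rewrite /= [X in (X * _)%E](_ : _ = (\sum_(k<n) \1_A (X k w))%:E); last exact: sumEFin.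
  by rewrite -EFinM mulrC.
exists (fun i => X i w), (fun i => if (i < n)%N then n%:R^-1 else 0).
have w0 i : 0 <= (if (i < n)%N then n%:R^-1 else 0 : R) by case: ifP.
have wn i : (n <= i)%N -> (if (i < n)%N then n%:R^-1 else 0 : R) = 0.
  by move=> ni; rewrite ltnNge ni.
split => //; split.
  rewrite (@fin_series R _ n w0 wn); congr (_%:E).
  under eq_bigr do rewrite ltn_ord.
  by rewrite sumr_const card_ord -[_ *+ n]mulr_natr mulVf // pnatr_eq0; case: (n) n0.
move=> A _; rewrite (@fin_series _ (fun i => (if (i < n)%N then n%:R^-1 else 0) * \1_A (X i w)) n).
- rewrite /empirical; congr (_%:E); rewrite mulr_sumr.
  by apply: eq_bigr => i _; rewrite ltn_ord.
- by move=> i; apply: mulr_ge0.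
- by move=> i ni; rewrite wn // mul0r.
Qed.
Lemma mod_small (R : realType) (f : R -> R) : modulus_of_continuity f ->
  forall e, 0 < e -> exists2 t, 0 < t & forall s, 0 <= s -> s <= t -> f s < e.
Proof.
case=> fc _ _ f0; have f00 : f 0 = 0 by apply/(f0 0 (lexx 0)).
move=> e e0.
have := (proj1 (subspace_continuousP _ _) fc 0 (lexx 0)).
move=> /cvgr_dist_lt/(_ e e0); rewrite near_withinE => /nbhs_ballP[r /= r0 H].
exists (r / 2); first by rewrite divr_gt0.
move=> s s0 sr.
have : ball (0:R) r s.
  rewrite -ball_normE /= sub0r normrN ger0_norm //.
  by apply: (le_lt_trans sr); rewrite ltr_pdivrMr // ltr_pMr // ltr1n.
move=> /H /(_ s0); rewrite /from_subspace f00 sub0r normrN => /(le_lt_trans (ler_norm _)).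
done.
Qed.
Fixpoint jn (N' : nat -> nat) n := match n with
  | 0 => 0
  | m.+1 => if (N' (jn N' m).+1 <= m.+1)%N then (jn N' m).+1 else jn N' m end.

Lemma jn_props (N' : nat -> nat) : N' 0 = 0 -> (forall j, N' j < N' j.+1)%N ->
  (forall n, N' (jn N' n) <= n)%N /\ (forall J n, N' J <= n -> J <= jn N' n)%N.
Proof.
move=> N0 Ninc.
have Nge j : (j <= N' j)%N.
  elim: j => [|j IH]; first by [].
  by have := Ninc j; lia.
split.
  elim=> [|m IH] /=; first by rewrite N0.
  by case: ifP => // _; lia.
move=> J n; elim: n J => [|m IH] J.
  by have := Nge J; lia.
move=> HJ /=.
case: (leqP (N' J) m) => HJm.
  have := IH J HJm; case: ifP => _; lia.
case: J HJ HJm => [|J] HJ HJm; first by [].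
have := Ninc J => hJ.
have := IH J (ltac:(lia)) => hle.
case: ifP => hc.
  lia.
have : jn N' m <> J.
  by move=> e; move: hc; rewrite e; lia.
lia.
Qed.

Fixpoint Nrec (Nj : nat -> nat) j := match j with
  | 0 => 0
  | i.+1 => maxn (Nrec Nj i).+1 (Nj i.+1) end.

Theorem theorem1 (R : realType) (dZ : measure_display) (Z : measurableType dZ)
  (dO : measure_display) (Omega : measurableType dO) (Pr : probability Omega R)
  (Theta : normedModType R)
  (M : set (setfun Z R)) (psi : setfun Z R -> Theta)
  (K : set R) (Dpsi : set (setfun Z R)) (psik : R -> setfun Z R -> Theta)
  (dist : setfun Z R -> setfun Z R -> R) (delta : R -> R -> R)
  (X : nat -> Omega -> Z) (P : setfun Z R) :
  (forall m, M m -> is_probability m) ->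
  M P ->
  iid_with_law Pr X P ->
  regularization M psi K Dpsi psik ->
  distance_on Dpsi dist ->
  continuous_regularization_at K Dpsi psik dist delta P ->
  oP1 Pr (fun n w => dist (empirical X n w) P) ->
  exists kn : nat -> R,
    [/\ (forall n, K (kn n)),
        (fun n => `|psik (kn n) P - psi P|) @ \oo --> (0 : R),
        oP1 Pr (fun n w => delta (kn n) (dist (empirical X n w) P)) &
        oP1 Pr (fun n w => `|psik (kn n) (empirical X n w) - psi P|)].
Proof.
move=> _ MP _ [[K0 Kub] _ _ Ddisc Bv] [d0 _ _ _] [dmod dcont] HD.
have /choice[kj hkj] : forall j : nat, exists k, K k /\ j%:R < k.
  by move=> j; have [k Kk jk] := Kub j%:R; exists k.
have /choice[t ht] : forall j : nat, exists t, 0 < t /\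
    forall s, 0 <= s -> s <= t -> delta (kj j) s < (j.+1%:R)^-1.
  move=> j.
  have [|t t0 Ht] := @mod_small R (delta (kj j)) (dmod _ (hkj j).1) (j.+1%:R)^-1.
    by rewrite invr_gt0 ltr0Sn.
  by exists t.
pose Q j n := exists A : set Omega, [/\ measurable A,
   [set w | t j < `|dist (empirical X n w) P|] `<=` A &
   (Pr A <= ((j.+1%:R)^-1)%:E)%E].
have /choice[Nj hNj] : forall j, exists N, forall n, (N <= n)%N -> Q j n.
  move=> j; have [N _ HN] := HD (t j) (ht j).1 ((j.+1%:R)^-1) ltac:(by rewrite invr_gt0 ltr0Sn).
  by exists N => n Nn; exact: HN.
have Q0 n : Q 0%N n.
  exists setT; split => //; rewrite probability_setT invr1 //.
pose N' := Nrec Nj.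
have HQ j n : (N' j <= n)%N -> Q j n.
  case: j => [_|i]; first exact: Q0.
  move=> h; apply: hNj; move: h; rewrite /N' /=; lia.
have [jn1 jn2] := @jn_props N' erefl (fun j => ltac:(rewrite /N' /=; lia)).
pose kn n := kj (jn N' n).
have claim2 : forall e, 0 < e -> \forall n \near \oo, `|psik (kn n) P - psi P| < e.
  move=> e e0; have [k0 Hk0] := Bv P MP e e0.
  pose J := Num.bound `|k0|.
  have kJ : k0 < J%:R := le_lt_trans (ler_norm k0) (archi_boundP (normr_ge0 _)).
  exists (N' J) => // n /= Hn.
  have := Hk0 (kn n) (hkj _).1; rewrite normr_id; apply.
  apply/ltW/(lt_trans kJ)/(le_lt_trans _ (hkj _).2).
  by rewrite ler_nat; apply: jn2.
have claim3 : oP1 Pr (fun n w => delta (kn n) (dist (empirical X n w) P)).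
  move=> eps e0 eta et0.
  pose m := Num.min eps eta.
  have m0 : 0 < m by rewrite lt_min e0 et0.
  pose J := Num.bound (m^-1).
  have mi0 : 0 <= m^-1 by rewrite invr_ge0 ltW.
  have mJ : m^-1 < J%:R := archi_boundP mi0.
  have Jm : (J.+1%:R)^-1 <= m.
    rewrite invf_ple ?posrE ?ltr0Sn //.
    by apply/ltW/(lt_le_trans mJ); rewrite ler_nat.
  have jJ j : (J <= j)%N -> (j.+1%:R)^-1 <= m.
    move=> Jj; apply: le_trans Jm.
    by rewrite lef_pV2 ?posrE ?ltr0Sn // ler_nat ltnS.
  exists (N' J) => // n /= Hn.
  have [A [mA sA PA]] := HQ _ _ (jn1 n).
  have jJn := jJ _ (jn2 _ _ Hn).
  exists A; split => //.
    move=> w /= hw; apply: sA => /=.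
    rewrite ltNge; apply/negP => hle.
    have dn := d0 (empirical X n w) P.
    rewrite ger0_norm // in hle.
    have hdl := (ht (jn N' n)).2 _ dn hle.
    have [_ _ dpos _] := dmod _ (hkj (jn N' n)).1.
    rewrite ger0_norm ?dpos // in hw.
    have : eps < m := lt_le_trans (lt_trans hw hdl) jJn.
    by rewrite lt_min ltxx.
  apply: (le_trans PA); rewrite lee_fin; apply: (le_trans jJn).
  by rewrite ge_min lexx orbT.
exists kn; split => //.
- by move=> n; exact: (hkj _).1.
- by apply/cvgr0Pnorm_lt => e e0; have := claim2 e e0; apply: filterS => n; rewrite normr_id.
move=> eps e0 eta et0.
have e20 : 0 < eps / 2 by rewrite divr_gt0.
have [N3 _ H3] := claim3 (eps / 2) e20 eta et0.
have [N2 _ H2] := claim2 (eps / 2) e20.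
exists (maxn 1 (maxn N2 N3)) => // n /= Hn.
have n0 : (0 < n)%N by move: Hn; lia.
have [A [mA sA PA]] := H3 n ltac:(rewrite /=; move: Hn; lia).
have HB := H2 n ltac:(rewrite /=; move: Hn; lia).
exists A; split => // w /= hw; apply: sA => /=.
have DP : Dpsi (empirical X n w) := Ddisc _ (@emp_discrete R dZ Z Omega X n w n0).
have tri := dcont (kn n) _ (hkj _).1 DP.
have := ler_distD (psik (kn n) P) (psik (kn n) (empirical X n w)) (psi P).
rewrite ger0_norm // in hw => htr.
have : eps < delta (kn n) (dist (empirical X n w) P) + eps / 2.
  apply: (lt_le_trans hw); apply: (le_trans htr).
  by apply: lerD => //; apply: ltW.
rewrite -ltrBlDr => h.
apply: (lt_le_trans _ (ler_norm _)).
by move: h; rewrite {1}(splitr eps) addrK.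
Qed.
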